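(* Let $X$ be a polyhedral normed space and $f: X\to X$ nonexpansive and real analytic. Let $\mathcal{M}(f)$ be the union of all minimal locked subsets of $B_{X^*}$ for $f$. If $x,y\in\operatorname{Fix}(f)$ satisfy $\phi(x)=\phi(y)$ for all $\phi\in\mathcal{M}(f)$, then $x=y$.
   Context: A polyhedral normed space is a finite-dimensional real normed space whose closed unit ball has finitely many extreme points; $B_{X^*}$ is the closed unit ball of the dual space. Nonexpansive: $\|f(x)-f(y)\|\le\|x-y\|$ for all $x,y$. Real analytic: locally given by a convergent power series. $\operatorname{Fix}(f)$ is the fixed point set of $f$. The duality map is $J(x)=\{\phi\in B_{X^*}: \phi(x)=\|x\|\}$. For $E\subseteq B_{X^*}$: $S_E(f)=\{x\in X: \phi(f(x))=\phi(x)\text{ for all }\phi\in E\}$. A set $E\subseteq B_{X^*}$ is locked (for $f$) if there exist $v,w\in S_E(f)$ with $J(v-w)=E$; a locked set is minimal if no proper subset of it is locked. *)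

(* Defs.v *)
From HB Require Import structures.
From mathcomp Require Import all_boot all_order all_algebra.
From mathcomp Require Import all_classical all_reals topology normedtype sequences.
Set Implicit Arguments. Unset Strict Implicit. Unset Printing Implicit Defensive.
Import Order.TTheory GRing.Theory Num.Theory numFieldNormedType.Exports.
Local Open Scope ring_scope.
Local Open Scope classical_set_scope.

(* A finite-dimensional real normed space is modelled as R^n = 'rV[R]_n
   equipped with an arbitrary norm N. *)
Definition is_norm (R : realType) (n : nat) (N : 'rV[R]_n -> R) : Prop :=
  [/\ forall x, N x = 0 -> x = 0,
      forall (a : R) x, N (a *: x) = `|a| * N x
    & forall x y, N (x + y) <= N x + N y].

Definition unit_ball (R : realType) (n : nat) (N : 'rV[R]_n -> R) : set 'rV[R]_n :=
  [set x | N x <= 1].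

Definition extreme_point (R : realType) (n : nat) (C : set 'rV[R]_n) (x : 'rV[R]_n) : Prop :=
  C x /\ forall (y z : 'rV[R]_n) (t : R), C y -> C z -> 0 < t < 1 ->
    x = t *: y + (1 - t) *: z -> y = x /\ z = x.

Definition polyhedral (R : realType) (n : nat) (N : 'rV[R]_n -> R) : Prop :=
  is_norm N /\ finite_set (extreme_point (unit_ball N)).

(* real-linear functionals X -> R (the dual space X^* ; finite dimension) *)
Definition lin_functional (R : realType) (n : nat) (phi : 'rV[R]_n -> R) : Prop :=
  (forall x y, phi (x + y) = phi x + phi y) /\ (forall (a : R) x, phi (a *: x) = a * phi x).

Definition dual_ball (R : realType) (n : nat) (N : 'rV[R]_n -> R) : set ('rV[R]_n -> R) :=
  [set phi | lin_functional phi /\ forall x, N x <= 1 -> `|phi x| <= 1].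

Definition duality_map (R : realType) (n : nat) (N : 'rV[R]_n -> R) (x : 'rV[R]_n)
  : set ('rV[R]_n -> R) :=
  [set phi | dual_ball N phi /\ phi x = N x].

Definition nonexpansive (R : realType) (n : nat) (N : 'rV[R]_n -> R)
  (f : 'rV[R]_n -> 'rV[R]_n) : Prop :=
  forall x y, N (f x - f y) <= N (x - y).

Definition Fix (R : realType) (n : nat) (f : 'rV[R]_n -> 'rV[R]_n) : set 'rV[R]_n :=
  [set x | f x = x].

Definition S_set (R : realType) (n : nat) (f : 'rV[R]_n -> 'rV[R]_n)
  (E : set ('rV[R]_n -> R)) : set 'rV[R]_n :=
  [set x | forall phi, E phi -> phi (f x) = phi x].

Definition locked (R : realType) (n : nat) (N : 'rV[R]_n -> R)
  (f : 'rV[R]_n -> 'rV[R]_n) (E : set ('rV[R]_n -> R)) : Prop :=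
  E `<=` dual_ball N /\
  exists v w, S_set f E v /\ S_set f E w /\ duality_map N (v - w) = E.

Definition minimal_locked (R : realType) (n : nat) (N : 'rV[R]_n -> R)
  (f : 'rV[R]_n -> 'rV[R]_n) (E : set ('rV[R]_n -> R)) : Prop :=
  locked N f E /\ forall E', E' `<` E -> ~ locked N f E'.

Definition M_set (R : realType) (n : nat) (N : 'rV[R]_n -> R)
  (f : 'rV[R]_n -> 'rV[R]_n) : set ('rV[R]_n -> R) :=
  [set phi | exists E, minimal_locked N f E /\ E phi].

(* Real analyticity on R^n (independent of the chosen norm).
   Multi-indices are functions 'I_n -> nat; monomial (x - a)^alpha. *)
Definition monomial (R : realType) (n : nat) (x a : 'rV[R]_n) (alpha : 'I_n -> nat) : R :=
  \prod_(i < n) (x ord0 i - a ord0 i) ^+ alpha i.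

Definition psum (R : realType) (n : nat) (c : ('I_n -> nat) -> R) (a x : 'rV[R]_n)
  (K : nat) : R :=
  \sum_(al : {ffun 'I_n -> 'I_K.+1}) c (fun i => nat_of_ord (al i)) * monomial x a (fun i => nat_of_ord (al i)).

Definition abs_psum (R : realType) (n : nat) (c : ('I_n -> nat) -> R) (a x : 'rV[R]_n)
  (K : nat) : R :=
  \sum_(al : {ffun 'I_n -> 'I_K.+1})
     `|c (fun i => nat_of_ord (al i))| * `|monomial x a (fun i => nat_of_ord (al i))|.

Definition real_analytic_scalar (R : realType) (n : nat) (g : 'rV[R]_n -> R) : Prop :=
  forall a : 'rV[R]_n, exists r : R, 0 < r /\ exists c : ('I_n -> nat) -> R,
    forall x : 'rV[R]_n, (forall i, `|x ord0 i - a ord0 i| < r) ->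
      (exists M : R, forall K, abs_psum c a x K <= M) /\
      (psum c a x K @[K --> \oo] --> g x).

Definition real_analytic (R : realType) (n : nat) (f : 'rV[R]_n -> 'rV[R]_n) : Prop :=
  forall j : 'I_n, real_analytic_scalar (fun x => f x ord0 j).

(* Main.v *)
Require Import Defs.
From mathcomp Require Import all_boot all_order all_algebra.
From mathcomp Require Import all_classical all_reals topology normedtype sequences.
From mathcomp Require Import lra zify.
Set Implicit Arguments. Unset Strict Implicit. Unset Printing Implicit Defensive.
Import Order.TTheory GRing.Theory Num.Theory.
Local Open Scope ring_scope.
Local Open Scope classical_set_scope.

Definition ev (R : realType) (n : nat) (g : 'cV[R]_n) (x : 'rV[R]_n) : R := (x *m g) 0 0.

Lemma evD (R : realType) (n : nat) (g : 'cV[R]_n) x y : ev g (x + y) = ev g x + ev g y.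
Proof. by rewrite /ev mulmxDl mxE. Qed.
Lemma evZ (R : realType) (n : nat) (g : 'cV[R]_n) (a : R) x : ev g (a *: x) = a * ev g x.
Proof. by rewrite /ev -scalemxAl mxE. Qed.
Lemma evgD (R : realType) (n : nat) (g h : 'cV[R]_n) x : ev (g + h) x = ev g x + ev h x.
Proof. by rewrite /ev mulmxDr mxE. Qed.
Lemma evgZ (R : realType) (n : nat) (g : 'cV[R]_n) (a : R) x : ev (a *: g) x = a * ev g x.
Proof. by rewrite /ev -scalemxAr mxE. Qed.
Lemma ev0 (R : realType) (n : nat) (g : 'cV[R]_n) : ev g 0 = 0.
Proof. by rewrite /ev mul0mx mxE. Qed.
Lemma evN (R : realType) (n : nat) (g : 'cV[R]_n) x : ev g (- x) = - ev g x.
Proof. by rewrite -scaleN1r evZ mulN1r. Qed.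

Lemma N0 (R : realType) (n : nat) (N : 'rV[R]_n -> R) : is_norm N -> N 0 = 0.
Proof. by case=> _ hZ _; rewrite -(scale0r (0 : 'rV[R]_n)) hZ normr0 mul0r. Qed.
Lemma NN (R : realType) (n : nat) (N : 'rV[R]_n -> R) x : is_norm N -> N (- x) = N x.
Proof. by case=> _ hZ _; rewrite -scaleN1r hZ normrN normr1 mul1r. Qed.
Lemma Nge0 (R : realType) (n : nat) (N : 'rV[R]_n -> R) x : is_norm N -> 0 <= N x.
Proof.
move=> hN; have := hN => -[_ _ hT]; have := hT x (- x).
rewrite subrr N0 // NN //; lra.
Qed.

Lemma exists_h (R : realType) (n : nat) (W : 'M[R]_n) (u : 'rV[R]_n) :
  ~~ (u <= W)%MS -> exists h : 'cV[R]_n, W *m h = 0 /\ ev h u = 1.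
Proof.
rewrite submxE; have hWC := mulmx_coker W; move: (cokermx W) hWC => C hWC /eqP hne.
have [j hj] : exists j, (u *m C) 0 j != 0.
  case: (pselect (exists j, (u *m C) 0 j != 0)) => // H; exfalso; apply: hne.
  apply/rowP => j; rewrite [X in _ = X]mxE; apply/eqP.
  case: (boolP ((u *m C) 0 j == 0)) => hj; first by [].
  by exfalso; apply: H; exists j.
exists (((u *m C) 0 j)^-1 *: col j C); split.
  by rewrite -scalemxAr colE mulmxA hWC mul0mx scaler0.
by rewrite evgZ /ev colE mulmxA -colE [col j _ 0 0]mxE mulVf.
Qed.

Lemma ext_step (R : realType) (n : nat) (N : 'rV[R]_n -> R) (W : 'M[R]_n)
  (g : 'cV[R]_n) (u : 'rV[R]_n) : is_norm N ->
  (forall x : 'rV[R]_n, (x <= W)%MS -> ev g x <= N x) ->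
  exists g' : 'cV[R]_n, (forall x, (x <= W)%MS -> ev g' x = ev g x) /\
   forall x : 'rV[R]_n, (x <= (W + u)%MS)%MS -> ev g' x <= N x.
Proof.
move=> hN hg; have hN' := hN; case: hN' => _ hZ hT.
case: (boolP (u <= W)%MS) => huW.
  exists g; split => // x hx; apply: hg; apply: submx_trans hx _.
  by rewrite addsmx_sub submx_refl huW.
have [h [hWh hhu]] := exists_h huW.
have hh0 : forall x, (x <= W)%MS -> ev h x = 0.
  by move=> x /submxP [D ->]; rewrite /ev -mulmxA hWh mulmx0 mxE.
pose S := [set r : R | exists w : 'rV[R]_n, (w <= W)%MS /\ r = ev g w - N (w - u)].
have key : forall w w', (w <= W)%MS -> (w' <= W)%MS ->
    ev g w - N (w - u) <= N (w' + u) - ev g w'.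
  move=> w w' hw hw'.
  have h1 := hg (w + w') (addmx_sub hw hw').
  rewrite evD in h1.
  have h2 := hT (w - u) (w' + u).
  have e : w - u + (w' + u) = w + w' by rewrite addrACA addNr addr0.
  rewrite e in h2; lra.
have S0 : S (ev g 0 - N (0 - u)) by exists 0; split => //; exact: sub0mx.
have hs : has_sup S.
  split; first by exists (ev g 0 - N (0 - u)).
  exists (N (0 + u) - ev g 0) => r [w [hw ->]]; apply: key => //; exact: sub0mx.
have ha_ub : forall w, (w <= W)%MS -> ev g w - N (w - u) <= sup S.
  by move=> w hw; apply: (sup_upper_bound hs); exists w.
have ha_lb : forall w, (w <= W)%MS -> sup S <= N (w + u) - ev g w.
  move=> w hw; apply: ge_sup; first by exists (ev g 0 - N (0 - u)).
  by move=> r [w' [hw' ->]]; apply: key.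
exists (g + (sup S - ev g u) *: h); split.
  by move=> x hx; rewrite evgD evgZ hh0 // mulr0 addr0.
move=> x /sub_addsmxP [[y1 y2] ->] /=.
have hw : (y1 *m W <= W)%MS by apply: submxMl.
move: (y1 *m W) hw => w hw.
rewrite [y2]mx11_scalar mul_scalar_mx.
move: (y2 0 0) => t.
rewrite evgD evgZ !evD !evZ hh0 // hhu.
set a := sup S.
case: (ltrgtP t 0) => ht.
- have hn : 0 < - t by rewrite oppr_gt0.
  have := ha_ub ((- t)^-1 *: w) (scalemx_sub _ hw).
  have -> : w + t *: u = (- t) *: ((- t)^-1 *: w - u).
    by rewrite scalerBr scalerA mulfV ?gt_eqF // scale1r scaleNr opprK.
  rewrite hZ gtr0_norm // evZ.
  have hi : (- t) * (- t)^-1 = 1 by rewrite mulfV // gt_eqF.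
  rewrite -/a => H; have H2 := ler_wpM2l (ltW hn) H; rewrite mulrBr mulrA hi mul1r in H2; lra.
- have := ha_lb (t^-1 *: w) (scalemx_sub _ hw).
  have -> : w + t *: u = t *: (t^-1 *: w + u).
    by rewrite scalerDr scalerA mulfV ?gt_eqF // scale1r.
  rewrite hZ gtr0_norm // evZ.
  have hi : t * t^-1 = 1 by rewrite mulfV // gt_eqF.
  rewrite -/a => H; have H2 := ler_wpM2l (ltW ht) H; rewrite mulrBr mulrA hi mul1r in H2; lra.
- rewrite ht scale0r addr0; have := hg w hw; lra.
Qed.

Lemma hb_exists (R : realType) (n : nat) (N : 'rV[R]_n -> R) (z : 'rV[R]_n) :
  is_norm N -> exists g : 'cV[R]_n, ev g z = N z /\ forall x, ev g x <= N x.
Proof.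
move=> hN; have hN' := hN; case: hN' => _ hZ hT.
have base : exists (W : 'M[R]_n) (g : 'cV[R]_n), (z <= W)%MS /\ ev g z = N z /\
    forall x, (x <= W)%MS -> ev g x <= N x.
  exists <<z>>%MS.
  case: (boolP (z == 0)) => hz.
    exists (0 : 'cV[R]_n); split; first by rewrite genmxE.
    split; first by rewrite /ev mulmx0 mxE (eqP hz) N0.
    by move=> x _; rewrite /ev mulmx0 mxE; apply: Nge0.
  have hz' : ~~ (z <= (0 : 'M[R]_n))%MS by rewrite submx0.
  have [h [_ hhz]] := exists_h hz'.
  exists (N z *: h); split; first by rewrite genmxE.
  split; first by rewrite evgZ hhz mulr1.
  move=> x; rewrite genmxE => /sub_rVP [a ->].
  rewrite evgZ evZ hhz mulr1 hZ mulrC.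
  apply: ler_wpM2r; [exact: Nge0 | exact: ler_norm].
have step : forall k : nat, exists (W : 'M[R]_n) (g : 'cV[R]_n), (z <= W)%MS /\
    (forall i : 'I_n, (i < k)%N -> (delta_mx (0 : 'I_1) i <= W)%MS) /\ ev g z = N z /\
    forall x, (x <= W)%MS -> ev g x <= N x.
  move=> k; elim: k => [|k IH]; last case: IH => W [g [hzW [hdel [hgz hg]]]].
    by have [W [g [? [? ?]]]] := base; exists W, g.
  case: (ltnP k n) => hk; last first.
    exists W, g; do !split => //.
    move=> i hi; apply: hdel; have := ltn_ord i; lia.
  pose u := delta_mx 0 (Ordinal hk) : 'rV[R]_n.
  have [g' [hg'W hg']] := ext_step u hN hg.
  exists (W + u)%MS, g'; split; first exact: submx_trans hzW (addsmxSl _ _).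
  split.
    move=> i hi; case: (ltnP i k) => hik.
      exact: submx_trans (hdel i hik) (addsmxSl _ _).
    have -> : i = Ordinal hk by apply: val_inj => /=; lia.
    exact: addsmxSr.
  by split => //; rewrite hg'W.
have [W [g [_ [hdel [hgz hg]]]]] := step n.
exists g; split => // x; apply: hg.
apply: submx_trans (submx1 x) _; apply/row_subP => i; rewrite row1; exact: hdel.
Qed.
Lemma lin_eval (R : realType) (n : nat) (phi : 'rV[R]_n -> R) (x : 'rV[R]_n) :
  lin_functional phi -> phi x = \sum_j x 0 j * phi (delta_mx 0 j).
Proof.
case=> hD hZ; have h0 : phi 0 = 0 by rewrite -(scale0r (0:'rV[R]_n)) hZ mul0r.
rewrite {1}(row_sum_delta x) (big_morph phi hD h0).
by apply: eq_bigr => j _; rewrite hZ.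
Qed.

Definition vphi (R : realType) (n : nat) (phi : 'rV[R]_n -> R) : 'rV[R]_n :=
  \row_j phi (delta_mx 0 j).

Lemma vphiE (R : realType) (n : nat) (phi : 'rV[R]_n -> R) j :
  vphi phi 0 j = phi (delta_mx 0 j).
Proof. by rewrite /vphi mxE. Qed.

Lemma rowij (R : realType) (k n : nat) (A : 'M[R]_(k, n)) i j : row i A 0 j = A i j.
Proof. by rewrite mxE. Qed.

Definition Pk (R : realType) (n : nat) (E : set ('rV[R]_n -> R)) (k : nat) : Prop :=
  exists A : 'M[R]_(k, n), row_free A /\ forall i, exists phi, E phi /\ row i A = vphi phi.

Lemma span_drop (R : realType) (n : nat) (N : 'rV[R]_n -> R) (z1 z2 : 'rV[R]_n) (k : nat) :
  N z1 != 0 -> duality_map N z2 `<` duality_map N z1 ->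
  Pk (duality_map N z2) k -> Pk (duality_map N z1) (k + 1).
Proof.
move=> hz [hsub hnsub] [A [hfree hrows]].
have [psi [h1 h2]] : exists psi, duality_map N z1 psi /\ ~ duality_map N z2 psi.
  apply: contrapT => H; apply: hnsub => psi hp; apply: contrapT => hn; apply: H.
  by exists psi.
case: (choice hrows) => F hF.
have hlin : forall i, lin_functional (F i) by move=> i; case: (hF i) => [[[]]].
have hnot : ~~ (vphi psi <= A)%MS.
  apply/negP => /submxP [D hD].
  have comb : forall x, psi x = \sum_i D 0 i * F i x.
    move=> x; rewrite (lin_eval x h1.1.1).
    transitivity (\sum_j x 0 j * \sum_i D 0 i * A i j).
      apply: eq_bigr => j _; congr (_ * _).
      by have := congr1 (fun M : 'rV[R]_n => M 0 j) hD; rewrite vphiE => ->; rewrite mxE.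
    under eq_bigr do rewrite mulr_sumr.
    rewrite exchange_big; apply: eq_bigr => i _.
    rewrite (lin_eval x (hlin i)) mulr_sumr; apply: eq_bigr => j _.
    have := congr1 (fun M : 'rV[R]_n => M 0 j) (hF i).2; rewrite rowij vphiE => ->.
    by rewrite mulrCA.
  have hs : \sum_i D 0 i = 1.
    have e := comb z1; rewrite h1.2 in e.
    have e2 : \sum_i D 0 i * F i z1 = (\sum_i D 0 i) * N z1.
      rewrite mulr_suml; apply: eq_bigr => i _; congr (_ * _).
      by have := (hsub _ (hF i).1).2.
    rewrite e2 in e.
    have : (1 - \sum_i D 0 i) * N z1 = 0 by rewrite mulrBl mul1r -e subrr.
    by move/eqP; rewrite mulf_eq0 (negbTE hz) orbF subr_eq0 => /eqP <-.
  apply: h2; split; first exact: h1.1.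
  rewrite comb -[RHS]mul1r -hs mulr_suml; apply: eq_bigr => i _; congr (_ * _).
  exact: (hF i).1.2.
exists (col_mx A (vphi psi)); split.
  rewrite /row_free -addsmxE.
  have hle : (\rank (A + vphi psi)%MS <= k + 1)%N by rewrite addsmxE; exact: rank_leq_row.
  have [hle' heq] := mxrank_leqif_sup (addsmxSl A (vphi psi)).
  have hlt : (\rank A < \rank (A + vphi psi)%MS)%N.
    rewrite ltn_neqAle hle' andbT heq; apply/negP => hs'; move/negP: hnot; apply.
    exact: submx_trans (addsmxSr A (vphi psi)) hs'.
  move: hfree; rewrite /row_free => /eqP hr; apply/eqP; lia.
move=> i; have -> : i = unsplit (fintype.split i) by rewrite splitK.
case: (fintype.split i) => j /=.
  by rewrite rowKu; case: (hF j) => h3 h4; exists (F j); split => //; exact: hsub.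
by rewrite rowKd row_id; exists psi.
Qed.

Lemma J_nonempty (R : realType) (n : nat) (N : 'rV[R]_n -> R) (z : 'rV[R]_n) :
  is_norm N -> exists phi, duality_map N z phi.
Proof.
move=> hN; have [g [hgz hg]] := hb_exists z hN.
exists (ev g); split => //; split.
  by split => [? ?|? ?]; [exact: evD | exact: evZ].
move=> x hx; rewrite ler_norml; apply/andP; split.
  by rewrite lerNl -evN; apply: le_trans (hg _) _; rewrite NN.
exact: le_trans (hg _) hx.
Qed.

Lemma Pk0 (R : realType) (n : nat) (E : set ('rV[R]_n -> R)) : Pk E 0.
Proof.
exists 0; split; first by rewrite /row_free mxrank0.
by case.
Qed.

Lemma Pk_big (R : realType) (n : nat) (E : set ('rV[R]_n -> R)) : ~ Pk E (n + 1).
Proof.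
case=> A [hA _]; move: hA; rewrite /row_free => /eqP hr.
have := rank_leq_col A; lia.
Qed.

Theorem lemma2p6 (R : realType) (n : nat) (N : 'rV[R]_n -> R)
  (f : 'rV[R]_n -> 'rV[R]_n) :
  polyhedral N -> nonexpansive N f -> real_analytic f ->
  forall x y : 'rV[R]_n, Fix f x -> Fix f y ->
  (forall phi, M_set N f phi -> phi x = phi y) -> x = y.
Proof.
move=> [hN _] _ _ x y hx hy hM; apply: contrapT => hxy.
have hN' := hN; case: hN' => hN0 hZ hT.
pose E := duality_map N (x - y).
have hzE : N (x - y) != 0.
  by apply/eqP => /hN0 /eqP; rewrite subr_eq0 => /eqP.
have lockJ : forall E' : set ('rV[R]_n -> R), Defs.locked N f E' -> E' `<=` E ->
    exists z', E' = duality_map N z' /\ N z' != 0.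
  move=> E' [_ [v [w [_ [_ hJ]]]]] hsub; exists (v - w); split => //.
  apply/eqP => /hN0 hvw; move: hsub; rewrite -hJ hvw => hsub.
  have h0 : duality_map N 0 (fun _ => 0).
    split; last by rewrite N0.
    split; first by split => *; rewrite ?addr0 ?mulr0.
    by move=> *; rewrite normr0.
  have := (hsub _ h0).2; move=> /esym /eqP; by rewrite (negbTE hzE).
have hlockedE : Defs.locked N f E.
  split; first by move=> phi [].
  exists x, y; split; first by move=> phi _; rewrite hx.
  by split => //; move=> phi _; rewrite hy.
have [Em [hmin hEm]] : exists Em, minimal_locked N f Em /\ Em `<=` E.
  apply: contrapT => Hno.
  have chain : forall m, (m <= n + 1)%N ->
      exists E' : set ('rV[R]_n -> R), Defs.locked N f E' /\ E' `<=` E /\ ~ Pk E' (n + 1 - m).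
    elim=> [_|m IH hm].
      by exists E; split => //; split => //; rewrite subn0; exact: Pk_big.
    have [E' [hl [hs hP]]] := IH (ltnW hm).
    have : ~ minimal_locked N f E' by move=> hmin'; apply: Hno; exists E'.
    move=> hnm.
    have [E'' [hprop hl'']] : exists E'', E'' `<` E' /\ Defs.locked N f E''.
      apply: contrapT => H; apply: hnm; split => // E'' hp hl2; apply: H.
      by exists E''.
    exists E''; split => //; split.
      by apply: subset_trans hs; case: hprop.
    move=> hP''; apply: hP.
    have [z1 [e1 hz1]] := lockJ E' hl hs.
    have [z2 [e2 _]] := lockJ E'' hl'' (subset_trans hprop.1 hs).
    have e3 : (n + 1 - m = (n + 1 - m.+1) + 1)%N by lia.
    rewrite e3 e1; apply: (@span_drop _ _ _ _ z2 _ hz1); first by rewrite -e1 -e2.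
    by rewrite -e2.
  have [E' [_ [_ hP]]] := chain (n + 1)%N (leqnn _).
  by apply: hP; rewrite subnn; exact: Pk0.
have [z' [ez' _]] := lockJ Em hmin.1 hEm.
have [phi hphi] := J_nonempty z' hN.
rewrite -ez' in hphi.
have hxy' := hM phi (ex_intro _ Em (conj hmin hphi)).
have [[[hD hZp] _] hval] := hEm _ hphi.
have e : phi (x - y) = phi x - phi y by rewrite -scaleN1r hD hZp mulN1r.
move: hval; rewrite e hxy' subrr => /esym /eqP.
by rewrite (negbTE hzE).
Qed.
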